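(* Let $A\in\mathbb{R}^{d\times n}$ have first column identically zero, i.e. $A_{i,1}=0$ for all $i\in[d]$. For each integer $j\ge0$ and $k\in\{0,1,\dots,\log n\}$, let $b_{j,k}\in\mathbb{R}^d$ be column $1+2^k j$ of $A$, with $b_{j,k}$ the zero vector if $1+2^kj>n$. Then: (1) for each $i\in[d]$, $\max_{j\in[n]}A_{i,j}^2\le(\log n)\sum_{k=0}^{\log n}\sum_{j=2}^{n+1}\big((b_{j,k})_i-(b_{j-1,k})_i\big)^2$; (2) $\sum_{i=1}^d\max_{j\in[n]}A_{i,j}^2\le(\log n)\sum_{k=0}^{\log n}\sum_{j=2}^{n+1}\|b_{j,k}-b_{j-1,k}\|_2^2$.
   Context: Here $\log$ denotes the base-2 logarithm and $n$ is a power of $2$, so that $\log n$ is an integer. *)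

(* Defs.v *)
From mathcomp Require Import all_boot all_order all_algebra.
Set Implicit Arguments. Unset Strict Implicit. Unset Printing Implicit Defensive.
Import Order.TTheory GRing.Theory Num.Theory.
Local Open Scope ring_scope.

(* Columns are indexed 0-based: paper's column c (1-based) is index c-1.
   [colent A i c] = A_{i, c+1} (paper indexing) if c < n, and 0 otherwise. *)
Definition colent (R : ringType) (d n : nat) (A : 'M[R]_(d, n)) (i : 'I_d) (c : nat) : R :=
  match @insub nat (fun x => x < n)%N 'I_n c with
  | Some c' => A i c'
  | None => 0
  end.

(* b_{j,k} = column 1 + 2^k j of A (paper, 1-based), zero if 1 + 2^k j > n;
   i.e. 0-based column index 2^k * j. *)
Definition bvec (R : ringType) (d n : nat) (A : 'M[R]_(d, n)) (j k : nat) : 'cV[R]_d :=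
  \col_i colent A i (2 ^ k * j)%N.

Definition norm2sq (R : ringType) (d : nat) (v : 'cV[R]_d) : R :=
  \sum_(i < d) (v i 0) ^+ 2.

(* max_{j in [n]} A_{i,j}^2 (entries are nonnegative so 0 is a neutral start) *)
Definition rowmaxsq (R : realDomainType) (d n : nat) (A : 'M[R]_(d, n)) (i : 'I_d) : R :=
  \big[Num.max/0]_(j < n) (A i j) ^+ 2.

(* Main.v *)
Require Import Defs.
From mathcomp Require Import all_boot all_order all_algebra.
From mathcomp Require Import zify ring lra.
Import Order.TTheory GRing.Theory Num.Theory.
Local Open Scope ring_scope.

Lemma colent_out (R : ringType) (d n : nat) (A : 'M[R]_(d, n)) i x :
  (n <= x)%N -> colent A i x = 0.
Proof. by move=> h; rewrite /colent insubF // ltnNge h. Qed.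

Lemma colent_in (R : ringType) (d n : nat) (A : 'M[R]_(d, n)) i (c : 'I_n) :
  colent A i c = A i c.
Proof. by rewrite /colent valK. Qed.

Lemma term_le (R : realDomainType) (a b : nat) (F : nat -> R) j0 :
  (forall j, 0 <= F j) -> (a <= j0)%N -> (j0 < b)%N ->
  F j0 <= \sum_(a <= j < b) F j.
Proof.
move=> F0 h1 h2.
rewrite (@big_cat_nat _ _ _ j0 a b _ _ h1 (ltnW h2)) /= [X in _ + X]big_ltn //=.
have s1 : 0 <= \sum_(a <= j < j0) F j by apply: sumr_ge0.
have s2 : 0 <= \sum_(j0.+1 <= j < b) F j by apply: sumr_ge0.
lra.
Qed.

Section Main.
Variables (R : realFieldType) (d m : nat) (A : 'M[R]_(d, 2 ^ m)) (i : 'I_d).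

Let f (x : nat) : R := colent A i x.
Let D (l : nat) : R := \sum_(2 <= j < (2 ^ m).+2)
    ((bvec A j l) i 0 - (bvec A j.-1 l) i 0) ^+ 2.

Lemma D_ge0 l : 0 <= D l.
Proof. by apply: sumr_ge0 => j _; apply: sqr_ge0. Qed.

Lemma claim t : forall k q, (k + t = m)%N -> (0 < q)%N -> (q <= 2 ^ t)%N ->
  f (2 ^ k * q) ^+ 2 <= t%:R * \sum_(l < t) D (k + l).
Proof.
elim: t => [|t IH] k q hk hq1 hq2.
  rewrite expn0 in hq2; have -> : q = 1%N by lia.
  rewrite /f colent_out; last by rewrite addn0 in hk; rewrite hk muln1.
  by rewrite expr0n /= mul0r.
have hS : \sum_(l < t.+1) D (k + l) = D k + \sum_(l < t) D (k.+1 + l).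
  by rewrite big_ord_recl /= addn0; congr (_ + _); apply: eq_bigr => l _;
     rewrite addnS addSn.
have S0 : 0 <= \sum_(l < t) D (k.+1 + l) by apply: sumr_ge0 => l _; apply: D_ge0.
have Dk0 := D_ge0 k.
have hN := expnS 2 t.
have hkm : (2 ^ m = 2 ^ k * 2 ^ t.+1)%N by rewrite -hk expnD.
have hk1 : (0 < 2 ^ k)%N by rewrite expn_gt0.
have [q' hq'] : exists q', q = (2 * q')%N \/ q.+1 = (2 * q')%N.
  exists (uphalf q); have := odd_double_half q; rewrite uphalf_half.
  case: (odd q) => /= h; [right | left]; lia.
rewrite hS.
case: hq' => hq'.
  have e : (2 ^ k * q = 2 ^ k.+1 * q')%N by rewrite hq' expnS; lia.
  have := IH k.+1 q' ltac:(lia) ltac:(lia) ltac:(lia).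
  rewrite e => h.
  have ht : (0 <= t%:R :> R) by [].
  rewrite -natr1; nra.
have e : (2 ^ k * q.+1 = 2 ^ k.+1 * q')%N by rewrite hq' expnS; lia.
have := IH k.+1 q' ltac:(lia) ltac:(lia) ltac:(lia).
rewrite -e => hb.
set a := f (2 ^ k * q) - f (2 ^ k * q.+1).
set b := f (2 ^ k * q.+1).
have -> : f (2 ^ k * q) = a + b by rewrite /a /b; ring.
have ha : a ^+ 2 <= D k.
  have -> : a ^+ 2 = ((bvec A q.+1 k) i 0 - (bvec A q.+1.-1 k) i 0) ^+ 2.
    by rewrite !mxE /a -sqrrN opprB.
  rewrite /D.
  apply: (@term_le _ _ _ (fun j => ((bvec A j k) i 0 - (bvec A j.-1 k) i 0) ^+ 2)).
  - by move=> j; apply: sqr_ge0.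
  - by lia.
  - have : (2 ^ t.+1 <= 2 ^ m)%N by rewrite hkm leq_pmull.
    lia.
set S := \sum_(l < t) D (k.+1 + l).
move: hb; rewrite -/S => hb.
have ht0 : (0 <= t%:R :> R) by [].
have [t0|tpos] := eqVneq t 0%N.
  have b0 : b ^+ 2 <= 0 by move: hb; rewrite t0 mul0r.
  have : b = 0 by apply/eqP; rewrite -sqrf_eq0 eq_le b0 sqr_ge0.
  move=> ->; rewrite addr0 t0 mul1r.
have S0' : 0 <= S by exact: S0.
  lra.
set T := t%:R : R.
have hT : 0 < T by rewrite /T ltr0n lt0n.
rewrite -natr1 -/T.
have key : T * (a + b) ^+ 2 <= T * ((T + 1) * (D k + S)).
  have h0 : 0 <= (T * a - b) ^+ 2 by apply: sqr_ge0.
  have S0' : 0 <= S by exact: S0.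
  have h1 : 0 <= (T * (T + 1)) * (D k - a ^+ 2).
    by apply: mulr_ge0; [apply: mulr_ge0; lra | lra].
  have hb' : b ^+ 2 <= T * S by exact: hb.
  have h2 : 0 <= (T + 1) * (T * S - b ^+ 2).
    by apply: mulr_ge0; lra.
  nra.
by rewrite ler_pM2l in key.
Qed.

Lemma part1 : (forall c : 'I_d, colent A c 0 = 0) ->
  rowmaxsq A i <=
     m%:R * \sum_(0 <= k < m.+1) \sum_(2 <= j < (2 ^ m).+2)
              ((bvec A j k) i 0 - (bvec A j.-1 k) i 0) ^+ 2.
Proof.
move=> hA.
have R0 : 0 <= m%:R * \sum_(0 <= k < m.+1) D k.
  by apply: mulr_ge0 => //; apply: sumr_ge0 => k _; apply: D_ge0.
rewrite /rowmaxsq; apply: (big_ind (fun y => y <= m%:R * \sum_(0 <= k < m.+1) D k)) => //.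
  by move=> x y hx hy; rewrite ge_max hx hy.
move=> c _.
have [c0|cpos] := eqVneq (val c) 0%N.
  by rewrite -colent_in c0 hA expr0n /=.
have := claim m 0 c (add0n m) ltac:(by rewrite lt0n) (ltnW (ltn_ord c)).
rewrite expn0 mul1n /f colent_in => h.
apply: (le_trans h); apply: ler_wpM2l => //.
rewrite big_mkord big_ord_recr /=.
have := D_ge0 m; set s := \sum_(_ < m) _; lra.
Qed.

End Main.

(* n = 2 ^ m, so log n = m. *)
Theorem lemmaC4 (R : realFieldType) (d m : nat) (A : 'M[R]_(d, 2 ^ m))
  (hA : forall i : 'I_d, colent A i 0 = 0) :
  (forall i : 'I_d,
     rowmaxsq A i <=
     m%:R * \sum_(0 <= k < m.+1) \sum_(2 <= j < (2 ^ m).+2)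
              ((bvec A j k) i 0 - (bvec A j.-1 k) i 0) ^+ 2)
  /\
  \sum_(i < d) rowmaxsq A i <=
     m%:R * \sum_(0 <= k < m.+1) \sum_(2 <= j < (2 ^ m).+2)
              norm2sq (bvec A j k - bvec A j.-1 k).
Proof.
split; first by move=> i; apply: part1.
apply: (le_trans (y := \sum_(i < d) (m%:R * \sum_(0 <= k < m.+1) \sum_(2 <= j < (2 ^ m).+2)
              ((bvec A j k) i 0 - (bvec A j.-1 k) i 0) ^+ 2))).
  by apply: ler_sum => i _; exact: part1.
rewrite -mulr_sumr le_eqVlt; apply/orP; left; apply/eqP; congr (_ * _).
rewrite exchange_big /=; apply: eq_bigr => k _.
rewrite exchange_big /=; apply: eq_bigr => j _.
by rewrite /norm2sq; apply: eq_bigr => i _; rewrite !mxE.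
Qed.
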